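(* Let $\theta_0\in\mathbb{R}^d$, source task vectors $\tau_1,\dots,\tau_T\in\mathbb{R}^d$ and a target task vector $\tau_{\mathrm{tar}}\in\mathbb{R}^d$ with $\|\tau_i\|^2\le C$ for all $i$ and $\|\tau_{\mathrm{tar}}\|^2\le C$, where $C>0$. Let $\theta_{\mathrm{tar}}=\theta_0+\tau_{\mathrm{tar}}$ and let $\mathcal{L}_{\mathrm{tar}}:\mathbb{R}^d\to\mathbb{R}$ be differentiable with $\nabla\mathcal{L}_{\mathrm{tar}}(\theta_{\mathrm{tar}})=0$, and suppose there is $L_{\mathrm{tar}}\ge 0$ such that for all $\theta$ with $\|\theta-\theta_{\mathrm{tar}}\|\le 2\sqrt{C}$, $\mathcal{L}_{\mathrm{tar}}(\theta)-\mathcal{L}_{\mathrm{tar}}(\theta_{\mathrm{tar}})\le\langle\theta-\theta_{\mathrm{tar}},\nabla\mathcal{L}_{\mathrm{tar}}(\theta_{\mathrm{tar}})\rangle+\frac{L_{\mathrm{tar}}}{2}\|\theta-\theta_{\mathrm{tar}}\|^2$. Assume $\langle\tau_{\mathrm{tar}},\tau_i\rangle\ge 0$ for all $i\in[T]$; let $i^\star\in\arg\max_{i\in[T]}\langle\tau_{\mathrm{tar}},\tau_i\rangle$ and suppose $\langle\tau_{\mathrm{tar}},\tau_{i^\star}\rangle\ge\gamma C$ for some $0<\gamma\le 1$. Let $\mathbf{W}_e\in\mathbb{R}^{T\times M}$ have every column in $\Delta^{T-1}$, let $B_m=\sum_{j=1}^T\mathbf{W}_e[j,m]\tau_j$, and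 suppose there is $m^\star\in[M]$ with $\mathbf{W}_e[i^\star,m^\star]\ge\rho$ for some $\rho\in(0,1]$. Then there exists $\alpha\in\Delta^{M-1}$ such that $\theta^M_{\mathrm{Add}}=\theta_0+\sum_{m=1}^M\alpha_mB_m$ satisfies $$\mathcal{L}_{\mathrm{tar}}(\theta^M_{\mathrm{Add}})\le\mathcal{L}_{\mathrm{tar}}(\theta_{\mathrm{tar}})+L_{\mathrm{tar}}C(1-\rho\gamma).$$
   Context: Norms and inner products are Euclidean. $\Delta^{K-1}=\{x\in\mathbb{R}^K: x\ge 0,\ \sum_k x_k=1\}$. The vectors $B_m$ are the basis vectors (convex combinations of task vectors) produced by a softmax-activated encoder with weight matrix $\mathbf{W}_e$. *)

(* Defs.v *)
From HB Require Import structures.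
From mathcomp Require Import all_boot all_order all_algebra.
From mathcomp Require Import all_classical all_reals all_analysis.
Set Implicit Arguments. Unset Strict Implicit. Unset Printing Implicit Defensive.
Import Order.TTheory GRing.Theory Num.Theory.
Import numFieldNormedType.Exports.
Local Open Scope ring_scope.

Definition dotv (R : realType) (d : nat) (u v : 'rV[R]_d) : R :=
  \sum_(i < d) u 0 i * v 0 i.

Definition enorm (R : realType) (d : nat) (u : 'rV[R]_d) : R :=
  Num.sqrt (dotv u u).

(* Gradient of f : R^d -> R at x: the vector of partial derivatives,
   i.e. the coordinates of the (Frechet) differential 'd f x on the
   standard basis.  (Meaningful when f is differentiable at x.) *)
Definition gradient (R : realType) (d : nat) (f : 'rV[R]_d -> R^o)
  (x : 'rV[R]_d) : 'rV[R]_d :=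
  \row_(i < d) ('d f x (delta_mx 0 i : 'rV[R]_d) : R).

Definition in_simplex (R : realType) (K : nat) (x : 'I_K -> R) : Prop :=
  (forall k, 0 <= x k) /\ \sum_(k < K) x k = 1.

(* Main.v *)
Require Import Defs.
From HB Require Import structures.
From mathcomp Require Import all_boot all_order all_algebra.
From mathcomp Require Import all_classical all_reals all_analysis.
From mathcomp Require Import ring lra.
Import Order.TTheory GRing.Theory Num.Theory.
Import numFieldNormedType.Exports.
Local Open Scope ring_scope.
Set Implicit Arguments. Unset Strict Implicit.

Section DotLemmas.
Variables (R : realType) (d : nat).
Implicit Types (u v w : 'rV[R]_d).

Lemma dotvC u v : dotv u v = dotv v u.
Proof. by rewrite /dotv; apply: eq_bigr => i _; rewrite mulrC. Qed.

Lemma dotvDl u v w : dotv (u + v) w = dotv u w + dotv v w.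
Proof. by rewrite /dotv -big_split; apply: eq_bigr => i _; rewrite mxE mulrDl. Qed.

Lemma dotvNl u w : dotv (- u) w = - dotv u w.
Proof. by rewrite /dotv -sumrN; apply: eq_bigr => i _; rewrite mxE mulNr. Qed.

Lemma dotvDr u v w : dotv w (u + v) = dotv w u + dotv w v.
Proof. by rewrite dotvC dotvDl !(dotvC w). Qed.

Lemma dotvNr u w : dotv w (- u) = - dotv w u.
Proof. by rewrite dotvC dotvNl dotvC. Qed.

Lemma dotvZl a u v : dotv (a *: u) v = a * dotv u v.
Proof. by rewrite /dotv mulr_sumr; apply: eq_bigr => i _; rewrite mxE mulrA. Qed.

Lemma dotv0r u : dotv u 0 = 0.
Proof. by rewrite /dotv big1 // => i _; rewrite mxE mulr0. Qed.

Lemma dotv_ge0 u : 0 <= dotv u u.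
Proof. by rewrite /dotv; apply: sumr_ge0 => i _; rewrite -expr2 sqr_ge0. Qed.

Lemma dotv_suml (I : finType) (F : I -> 'rV[R]_d) v :
  dotv (\sum_(j : I) F j) v = \sum_(j : I) dotv (F j) v.
Proof.
rewrite /dotv; under eq_bigr do rewrite summxE mulr_suml.
by rewrite exchange_big.
Qed.

Lemma dotv_2le u v : 2 * dotv u v <= dotv u u + dotv v v.
Proof.
have := dotv_ge0 (u - v).
rewrite !dotvDl !dotvNl !dotvDr !dotvNr (dotvC v u).
lra.
Qed.
End DotLemmas.

Theorem mainTheorem6 (R : realType) (d T M : nat)
  (theta0 : 'rV[R]_d) (tau : 'I_T -> 'rV[R]_d) (tau_tar : 'rV[R]_d)
  (C : R) (Ltar_fun : 'rV[R]_d -> R^o) (Ltar gamma rho : R)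
  (We : 'M[R]_(T, M)) (istar : 'I_T) (mstar : 'I_M) :
  0 < C ->
  (forall i, dotv (tau i) (tau i) <= C) ->
  dotv tau_tar tau_tar <= C ->
  (forall theta, differentiable Ltar_fun theta) ->
  gradient Ltar_fun (theta0 + tau_tar) = 0 ->
  0 <= Ltar ->
  (forall theta, enorm (theta - (theta0 + tau_tar)) <= 2 * Num.sqrt C ->
     Ltar_fun theta - Ltar_fun (theta0 + tau_tar)
       <= dotv (theta - (theta0 + tau_tar)) (gradient Ltar_fun (theta0 + tau_tar))
          + Ltar / 2 * enorm (theta - (theta0 + tau_tar)) ^+ 2) ->
  (forall i, 0 <= dotv tau_tar (tau i)) ->
  (forall i, dotv tau_tar (tau i) <= dotv tau_tar (tau istar)) ->
  0 < gamma -> gamma <= 1 ->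
  gamma * C <= dotv tau_tar (tau istar) ->
  (forall m, in_simplex (fun j => We j m)) ->
  0 < rho -> rho <= 1 ->
  rho <= We istar mstar ->
  exists alpha : 'I_M -> R,
    in_simplex alpha /\
    Ltar_fun (theta0 + \sum_(m < M) alpha m *: (\sum_(j < T) We j m *: tau j))
      <= Ltar_fun (theta0 + tau_tar) + Ltar * C * (1 - rho * gamma).
Proof.
move=> C0 hC hCt _ hgrad hL hsmooth hpos _ g0 g1 hg hW r0 r1 hr.
exists (fun m => (m == mstar)%:R); split.
  split=> [k|]; first by case: (k == mstar).
  by rewrite (bigD1 mstar) //= eqxx big1 ?addr0 // => k /negbTE ->.
set w := fun j => We j mstar.
have w0 : forall j, 0 <= w j by move=> j; exact: (hW mstar).1.
have w1 : \sum_(j < T) w j = 1 by exact: (hW mstar).2.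
set B := \sum_(j < T) w j *: tau j.
have -> : \sum_(m < M) (m == mstar)%:R *: (\sum_(j < T) We j m *: tau j) = B.
  rewrite (bigD1 mstar) //= eqxx scale1r [X in _ + X]big1 ?addr0 //.
  by move=> k /negbTE ->; rewrite scale0r.
have hBB : dotv B B <= C.
  rewrite dotv_suml.
  have -> : \sum_(j < T) dotv (w j *: tau j) B =
            \sum_(j < T) \sum_(k < T) w j * w k * dotv (tau j) (tau k).
    apply: eq_bigr => j _; rewrite dotvZl dotvC dotv_suml mulr_sumr.
    by apply: eq_bigr => k _; rewrite dotvZl dotvC mulrA [w j * _]mulrC.
  apply: (@le_trans _ _ (\sum_(j < T) \sum_(k < T) w j * w k * C)).
    apply: ler_sum => j _; apply: ler_sum => k _.
    apply: ler_wpM2l; first by rewrite mulr_ge0.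
    have := dotv_2le (tau j) (tau k); have := hC j; have := hC k; lra.
  have -> : \sum_(j < T) \sum_(k < T) w j * w k * C =
            \sum_(j < T) (w j * C) * \sum_(k < T) w k.
    apply: eq_bigr => j _; rewrite mulr_sumr; apply: eq_bigr => k _.
    by rewrite mulrAC.
  rewrite w1; under eq_bigr do rewrite mulr1.
  by rewrite -mulr_suml w1 mul1r.
have hBt : rho * gamma * C <= dotv tau_tar B.
  rewrite dotvC dotv_suml (bigD1 istar) //=.
  apply: (@le_trans _ _ (dotv (w istar *: tau istar) tau_tar)).
    rewrite dotvZl dotvC -mulrA; apply: ler_pM => //.
    - exact: ltW.
    - by rewrite mulr_ge0 // ltW.
  rewrite lerDl; apply: sumr_ge0 => j _; rewrite dotvZl dotvC mulr_ge0 //.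
set x := B - tau_tar.
have hx : dotv x x = dotv B B - 2 * dotv tau_tar B + dotv tau_tar tau_tar.
  rewrite /x !dotvDl !dotvNl !dotvDr !dotvNr (dotvC B tau_tar).
  lra.
have hxle : dotv x x <= 2 * C * (1 - rho * gamma) by rewrite hx; lra.
have hrg : 0 <= rho * gamma by rewrite mulr_ge0 // ltW.
have hrg1 : rho * gamma <= 1 by rewrite -(mulr1 1) ler_pM // ltW.
have eq : theta0 + B - (theta0 + tau_tar) = x.
  by rewrite opprD addrACA subrr add0r.
have hnorm : enorm x <= 2 * Num.sqrt C.
  have -> : 2 * Num.sqrt C = Num.sqrt (2 ^+ 2 * C).
    by rewrite sqrtrM ?sqr_ge0 // sqrtr_sqr ger0_norm.
  apply: ler_wsqrtr.
  have : rho * gamma * C <= C by rewrite -{2}(mul1r C) ler_wpM2r // ltW.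
  have h2 : 0 <= rho * gamma * C by rewrite mulr_ge0 // ltW.
  have : dotv x x <= 2 * C by rewrite hx; lra.
  rewrite expr2; lra.
have := hsmooth (theta0 + B); rewrite eq hgrad dotv0r add0r => /(_ hnorm).
rewrite /enorm sqr_sqrtr ?dotv_ge0 // => h.
have : Ltar / 2 * dotv x x <= Ltar / 2 * (2 * C * (1 - rho * gamma)).
  by apply: ler_wpM2l => //; rewrite divr_ge0.
have -> : Ltar / 2 * (2 * C * (1 - rho * gamma)) = Ltar * C * (1 - rho * gamma).
  by rewrite -!mulrA; congr (_ * _); rewrite mulrA mulVf ?mul1r // pnatr_eq0.
lra.
Qed.
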